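(* Let $S$ be $\mathbb{R}$ or $\mathbb{C}$. Then: (i) $n\mapsto g\big[\mathbf{CP}_n(S)\big]$ is non-decreasing; (ii) $g\big[\mathbf{CP}_{2n}(S)\big]\ge2\,g\big[\mathbf{CP}_n(S)\big]$ for all $n\in\mathbb{N}$; (iii) if $k\ge2$ is an integer, $C>0$, and $g\big[\mathbf{CP}_n(S)\big]\ge Cn$ for all $n=k,\dots,2k-1$, then $g\big[\mathbf{CP}_n(S)\big]\ge\frac{(1/k;1/2)_\infty}{1-1/k}\,Cn$ for all $n\ge k$, where $(x;q)_\infty=\prod_{i=0}^{\infty}(1-xq^i)$.
   Context: For an $n\times n$ complex matrix $A=(a_{i,j})$, Gaussian elimination without pivoting is the recursion $a^{(1)}_{i,j}=a_{i,j}$ and $a^{(k+1)}_{i,j}=a^{(k)}_{i,j}-a^{(k)}_{i,k}a^{(k)}_{k,j}/a^{(k)}_{k,k}$ for $k+1\le i,j\le n$, $k=1,\dots,n-1$ (defined when all pivots are nonzero). Growth factor: $g(A)=\max_{i,j,k}|a^{(k)}_{i,j}|/\max_{i,j}|a_{i,j}|$; for a set $\mathbf{X}$ of matrices, $g[\mathbf{X}]=\sup_{A\in\mathbf{X}}g(A)$. $\mathbf{CP}_n(S)$ is the set of invertible $A\in S^{n\times n}$ for which elimination is defined and $|a^{(k)}_{i,j}|\le|a^{(k)}_{k,k}|$ for all $k$ and all $i,j\ge k$. *)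

(* Defs.v *)
From HB Require Import structures.
From mathcomp Require Import all_boot all_order all_algebra.
From mathcomp Require Import all_classical all_reals all_analysis.
From mathcomp Require Import complex.
Set Implicit Arguments. Unset Strict Implicit. Unset Printing Implicit Defensive.
Import Order.TTheory GRing.Theory Num.Theory.
Local Open Scope ring_scope.
Local Open Scope classical_set_scope.

Section GE.
Variables (R : realType) (F : fieldType) (nrm : F -> R).

(* One elimination step with (0-based) pivot index k:
   a^{(k+1)}_{ij} = a^{(k)}_{ij} - a^{(k)}_{ik} a^{(k)}_{kj} / a^{(k)}_{kk}
   for k < i, j; other entries are left unchanged (they are never used). *)
Definition ge_step n (k : 'I_n) (A : 'M[F]_n) : 'M[F]_n :=
  \matrix_(i, j) if (k < i)%N && (k < j)%N
                 then A i j - A i k * A k j / A k k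
                 else A i j.

(* ge_iter A k = a^{(k+1)} in the paper's 1-based notation (ge_iter A 0 = A);
   for k < n, ge_iter A k.+1 = ge_step k (ge_iter A k). *)
Fixpoint ge_iter n (A : 'M[F]_n) (k : nat) : 'M[F]_n :=
  match k with
  | 0 => A
  | k'.+1 => let B := ge_iter A k' in
             if @insub _ (fun m => (m < n)%N) 'I_n k' is Some kk then ge_step kk B else B
  end.

Definition ge_defined n (A : 'M[F]_n) : Prop :=
  forall k : 'I_n, (k.+1 < n)%N -> ge_iter A k k k != 0.

Definition CPset n : set 'M[F]_n :=
  [set A | A \in unitmx /\ ge_defined A /\
     forall (k i j : 'I_n), (k <= i)%N -> (k <= j)%N ->
       nrm (ge_iter A k i j) <= nrm (ge_iter A k k k)].

Definition growth n (A : 'M[F]_n) : R :=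
  (\big[Num.max/0]_(k < n) \big[Num.max/0]_(i < n | (k <= i)%N)
      \big[Num.max/0]_(j < n | (k <= j)%N) nrm (ge_iter A k i j))
  / (\big[Num.max/0]_(i < n) \big[Num.max/0]_(j < n) nrm (A i j)).

Definition gCP n : \bar R := ereal_sup [set (growth A)%:E | A in @CPset n].
End GE.

Inductive scalars := SReal | SComplex.

Definition gCPS (R : realType) (S : scalars) (n : nat) : \bar R :=
  match S with
  | SReal => gCP (F := R) (fun x : R => `|x|) n
  | SComplex => gCP (F := R[i]) (@ComplexField.Normc.normc R) n
  end.

Definition qpoch (R : realType) (x q : R) : R :=
  limn (fun N : nat => \prod_(i < N) (1 - x * q ^+ i)).

(* Main.v *)
Require Import Defs.
From HB Require Import structures.
From mathcomp Require Import all_boot all_order all_algebra.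
From mathcomp Require Import all_classical all_reals all_analysis.
From mathcomp Require Import complex.
From mathcomp Require Import zify ring lra.
Import Order.TTheory GRing.Theory Num.Theory.
Local Open Scope ring_scope.
Set Implicit Arguments. Unset Strict Implicit. Unset Printing Implicit Defensive.

Section Gen.
Variable (F : fieldType).

Lemma ge_iterS n (A : 'M[F]_n) k (Hk : (k < n)%N) :
  ge_iter A k.+1 = ge_step (Ordinal Hk) (ge_iter A k).
Proof. by rewrite /= insubT. Qed.

Lemma ge_iterSn n (A : 'M[F]_n) k : (n <= k)%N -> ge_iter A k.+1 = ge_iter A k.
Proof. by move=> H; rewrite /= insubF // ltnNge H. Qed.

Lemma ge_iter_frozen n (A : 'M[F]_n) k (i j : 'I_n) :
  ~~ ((k < i) && (k < j))%N -> ge_iter A k.+1 i j = ge_iter A k i j.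
Proof.
move=> H; case: (ltnP k n) => Hk.
  by rewrite (ge_iterS _ Hk) mxE /= (negbTE H).
by rewrite ge_iterSn.
Qed.

Lemma ge_iter_frozenL n (A : 'M[F]_n) k m (i j : 'I_n) :
  ((i <= k) || (j <= k))%N -> (k <= m)%N -> ge_iter A m i j = ge_iter A k i j.
Proof.
move=> H; elim: m => [|m IH]; first by rewrite leqn0 => /eqP->.
rewrite leq_eqVlt => /orP [/eqP <- // | ltk].
rewrite ge_iter_frozen ?IH //.
apply/negP => /andP [H1 H2]; case/orP: H => H; lia.
Qed.

Definition Gm n (A : 'M[F]_n) k : 'M[F]_n :=
  \matrix_(i, j) if (j < k)%N && (j < i)%N then 0 else ge_iter A k i j.

Lemma Gm_det n (A : 'M[F]_n) k : ge_defined A -> (k <= n)%N -> \det (Gm A k) = \det A.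
Proof.
move=> Hd; elim: k => [|k IH] Hk.
  by congr (\det _); apply/matrixP => i j; rewrite mxE.
have Hk' : (k < n)%N by [].
set B := ge_iter A k.
set c : 'cV[F]_n := \col_i (if (k < i)%N then B i (Ordinal Hk') / B (Ordinal Hk') (Ordinal Hk') else 0).
have -> : Gm A k.+1 = (1%:M - c *m delta_mx 0 (Ordinal Hk')) *m Gm A k.
  rewrite mulmxBl mul1mx -mulmxA -rowE.
  apply/matrixP => i j; rewrite !mxE big_ord1 !mxE (ge_iterS _ Hk') mxE -/B /=.
  case: (ltnP k i) => ki /=.
  - case: (ltngtP j k) => jk /=.
    + have h1 : (j < i)%N by lia.
      by rewrite h1 andbT ltnS (ltnW jk) mulr0 subr0.
    + by rewrite ltnS leqNgt jk /= mulrAC.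
    + have jk' : j = Ordinal Hk' by apply: val_inj.
      have h1 : (j < k.+1)%N && (j < i)%N by lia.
      rewrite h1 jk' mulfVK ?subrr //.
      apply: Hd => /=; have := ltn_ord i; lia.
  - rewrite mul0r subr0.
    case: (ltnP j i) => ji; last by rewrite !andbF.
    have -> : (j < k)%N by lia.
    have -> : (j < k.+1)%N by lia. by [].
rewrite det_mulmx IH ?(ltnW Hk) // det_trig ?mulr1.
  rewrite big1 ?mul1r // => i _; rewrite !mxE big_ord1 !mxE eqxx /=.
  case: (ltnP k i) => ki; rewrite ?mul0r ?subr0 //.
  rewrite (_ : (i == _) = false) ?mulr0 ?subr0 //; apply/negbTE/eqP => /(congr1 val) /=; lia.
apply/is_trig_mxP => i j ij; rewrite !mxE big_ord1 !mxE.
rewrite (_ : (i == j) = false); last by apply/negbTE/eqP => /(congr1 val) /=; lia.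
case: (ltnP k i) => ki; last by rewrite mul0r subr0.
rewrite (_ : (j == _) = false) ?andbF ?mulr0 ?subr0 //.
by apply/negbTE/eqP => /(congr1 val) /=; lia.
Qed.

Lemma det_pivots n (A : 'M[F]_n) : ge_defined A ->
  \det A = \prod_(i < n) ge_iter A i i i.
Proof.
move=> Hd; rewrite -(Gm_det Hd (leqnn n)) -det_tr det_trig.
  apply: eq_bigr => i _; rewrite !mxE ltnn andbF.
  by apply: ge_iter_frozenL; rewrite ?leqnn // ltnW.
by apply/is_trig_mxP => i j ij; rewrite !mxE ij ltn_ord.
Qed.

Lemma unit_pivots n (A : 'M[F]_n) : ge_defined A ->
  (A \in unitmx) <-> (forall i : 'I_n, ge_iter A i i i != 0).
Proof.
move=> Hd; rewrite unitmxE unitfE det_pivots //.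
by split => [/prodf_neq0 H i | H]; [exact: H | apply/prodf_neq0 => i _; exact: H].
Qed.

End Gen.

Section Big.
Variable R : realType.

Lemma bmax_ge (I : finType) (P : pred I) (f : I -> R) i :
  P i -> f i <= \big[Num.max/0]_(j | P j) f j.
Proof. by move=> Pi; rewrite (bigD1 i) //= le_max lexx. Qed.

Lemma bmax_le (I : finType) (P : pred I) (f : I -> R) c :
  0 <= c -> (forall i, P i -> f i <= c) -> \big[Num.max/0]_(j | P j) f j <= c.
Proof. by move=> c0 H; apply: (big_ind (fun x => x <= c)) => //= x y hx hy; rewrite ge_max hx hy. Qed.

Lemma bmax_ge0 (I : finType) (P : pred I) (f : I -> R) :
  0 <= \big[Num.max/0]_(j | P j) f j.
Proof. by elim/big_rec: _ => // i x _ hx; rewrite le_max hx orbT. Qed.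
End Big.

Section Growth.
Variables (R : realType) (F : fieldType) (nrm : F -> R).
Hypothesis nrm_ge0 : forall x, 0 <= nrm x.

Definition gnum n (A : 'M[F]_n) := \big[Num.max/0]_(k < n) \big[Num.max/0]_(i < n | (k <= i)%N)
      \big[Num.max/0]_(j < n | (k <= j)%N) nrm (ge_iter A k i j).
Definition gden n (A : 'M[F]_n) := \big[Num.max/0]_(i < n) \big[Num.max/0]_(j < n) nrm (A i j).

Lemma growthE n (A : 'M[F]_n) : growth nrm A = gnum A / gden A.
Proof. by []. Qed.

Lemma gnum_ge n (A : 'M[F]_n) (k i j : 'I_n) : (k <= i)%N -> (k <= j)%N ->
  nrm (ge_iter A k i j) <= gnum A.
Proof.
move=> ki kj; rewrite /gnum (bigD1 k) //= le_max; apply/orP; left.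
rewrite (bigD1 i) //= le_max; apply/orP; left.
by rewrite (bigD1 j) //= le_max lexx.
Qed.

Lemma gnum_le n (A : 'M[F]_n) c : 0 <= c ->
  (forall k i j : 'I_n, (k <= i)%N -> (k <= j)%N -> nrm (ge_iter A k i j) <= c) -> gnum A <= c.
Proof.
move=> c0 H; apply: bmax_le => // k _; apply: bmax_le => // i ki; apply: bmax_le => // j kj.
exact: H.
Qed.

Lemma gden_ge n (A : 'M[F]_n) (i j : 'I_n) : nrm (A i j) <= gden A.
Proof.
rewrite /gden (bigD1 i) //= le_max; apply/orP; left.
by rewrite (bigD1 j) //= le_max lexx.
Qed.

Lemma gden_le n (A : 'M[F]_n) c : 0 <= c ->
  (forall i j : 'I_n, nrm (A i j) <= c) -> gden A <= c.
Proof. by move=> c0 H; apply: bmax_le => // i _; apply: bmax_le => // j _. Qed.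

Lemma gnum_ge0 n (A : 'M[F]_n) : 0 <= gnum A.
Proof. exact: bmax_ge0. Qed.

Lemma gCP_transfer n m (c : R) : 0 < c ->
  (forall A : 'M[F]_n, CPset nrm A -> exists B : 'M[F]_m,
      CPset nrm B /\ c * growth nrm A <= growth nrm B) ->
  (c%:E * gCP nrm n <= gCP nrm m)%E.
Proof.
move=> c0 H.
have h : (gCP nrm n <= c^-1%:E * gCP nrm m)%E.
  apply: ge_ereal_sup => _ [A hA <-].
  rewrite lee_pdivlMl //; have [B [hB hle]] := H A hA.
  apply: (@le_trans _ _ (growth nrm B)%:E); first by rewrite -EFinM lee_fin.
  by apply: ereal_sup_ubound; exists B.
apply: (le_trans (lee_wpmul2l _ h)); first by rewrite lee_fin ltW.
by rewrite muleA -EFinM divff ?gt_eqF // mul1e.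
Qed.
End Growth.

Section Norm.
Variables (R : realType) (F : fieldType) (nrm : F -> R).
Hypotheses (nrm_ge0 : forall x, 0 <= nrm x) (nrm_gt0 : forall x, x != 0 -> 0 < nrm x)
  (nrm0 : nrm 0 = 0) (nrmM : forall x y, nrm (x * y) = nrm x * nrm y)
  (nrmD : forall x y, nrm (x + y) <= nrm x + nrm y) (nrmN1 : nrm (-1) = 1)
  (nrm2 : nrm 2 = 2).

Lemma nrm1 : nrm 1 = 1.
Proof. have -> : (1:F) = -1 * -1 by rewrite mulrNN mulr1. by rewrite nrmM nrmN1 mulr1. Qed.

Lemma nrmN x : nrm (- x) = nrm x.
Proof. by rewrite -mulN1r nrmM nrmN1 mul1r. Qed.

Lemma nrmV x : nrm (x^-1) = (nrm x)^-1.
Proof.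
have [->|x0] := eqVneq x 0; first by rewrite invr0 nrm0 invr0.
have h : nrm x * nrm x^-1 = 1 by rewrite -nrmM divff // nrm1.
by rewrite -[RHS]mulr1 -h mulrA mulVf ?mul1r // gt_eqF // nrm_gt0.
Qed.

Lemma nrm_div x y : nrm (x / y) = nrm x / nrm y.
Proof. by rewrite nrmM nrmV. Qed.

Definition Bmat n (x : F) (X : 'M[F]_n) : 'M[F]_n.+1 :=
  \matrix_(i, j) match unlift ord0 i, unlift ord0 j with
                 | Some i', Some j' => X i' j'
                 | None, None => x
                 | _, _ => 0 end.

Lemma Bmat_ll n x (X : 'M[F]_n) i j : Bmat x X (lift ord0 i) (lift ord0 j) = X i j.
Proof. by rewrite mxE !liftK. Qed.
Lemma Bmat_00 n x (X : 'M[F]_n) : Bmat x X ord0 ord0 = x.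
Proof. by rewrite mxE unlift_none. Qed.
Lemma Bmat_0l n x (X : 'M[F]_n) j : Bmat x X ord0 (lift ord0 j) = 0.
Proof. by rewrite mxE unlift_none liftK. Qed.
Lemma Bmat_l0 n x (X : 'M[F]_n) i : Bmat x X (lift ord0 i) ord0 = 0.
Proof. by rewrite mxE unlift_none liftK. Qed.

Lemma ge_step_Bmat n x (X : 'M[F]_n) (k : 'I_n) :
  ge_step (lift ord0 k) (Bmat x X) = Bmat x (ge_step k X).
Proof.
apply/matrixP => i j; rewrite [LHS]mxE.
case: (unliftP ord0 i) => [i'|] ->; case: (unliftP ord0 j) => [j'|] ->;
  rewrite ?lift0 ?ltnS ?ltn0 ?andbF ?Bmat_ll ?Bmat_00 ?Bmat_0l ?Bmat_l0 //.
by rewrite mxE.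
Qed.

Lemma ge_iter_Bmat n x (X : 'M[F]_n) k : ge_iter (Bmat x X) k.+1 = Bmat x (ge_iter X k).
Proof.
elim: k => [|k IH].
  have h0 : (0 < n.+1)%N by [].
  rewrite (ge_iterS _ h0) /=; apply/matrixP => i j; rewrite mxE.
  have -> : Ordinal h0 = ord0 by apply: val_inj.
  case: (unliftP ord0 i) => [i'|] ->; case: (unliftP ord0 j) => [j'|] ->;
    rewrite ?lift0 ?ltn0 ?andbF //= Bmat_l0 !mul0r subr0 //.
case: (ltnP k n) => hk.
  have hk' : (k.+1 < n.+1)%N by [].
  rewrite (ge_iterS _ hk') IH (ge_iterS _ hk) -ge_step_Bmat.
  by congr ge_step; apply: val_inj.
by rewrite [LHS]ge_iterSn // IH [in RHS]ge_iterSn.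
Qed.

Lemma ge_iter_Bmat' n x (X : 'M[F]_n) k (i j : 'I_n) :
  ge_iter (Bmat x X) (lift (@ord0 n) k) (lift ord0 i) (lift ord0 j) = ge_iter X k i j.
Proof. by rewrite lift0 ge_iter_Bmat Bmat_ll. Qed.

Lemma step_i n (A : 'M[F]_n.+1) : CPset nrm A ->
  exists B : 'M[F]_n.+2, CPset nrm B /\ 1 * growth nrm A <= growth nrm B.
Proof.
case=> hU [hD hC].
have piv := (unit_pivots hD).1 hU.
pose f := fun p : 'I_n.+1 * 'I_n.+1 => nrm (A p.1 p.2).
have [p _ hp] := arg_maxP f (erefl true : xpredT (ord0, ord0)).
have hmax : forall i j, nrm (A i j) <= nrm (A p.1 p.2).
  by move=> i j; exact: (hp (i, j)).
set x := A p.1 p.2.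
have x0 : x != 0.
  apply/eqP => hx; have := piv ord0; have := hmax ord0 ord0.
  rewrite -/x hx nrm0 /= => h1 h2; have := nrm_gt0 h2; rewrite ltNge h1 //.
set B := Bmat x A.
have hpivB : forall k : 'I_n.+2, ge_iter B k k k != 0.
  move=> k; case: (unliftP ord0 k) => [k'|] ->.
    by rewrite ge_iter_Bmat'; exact: piv.
  by rewrite /= Bmat_00.
have hDB : ge_defined B by move=> k _; exact: hpivB.
have hUB : B \in unitmx by apply/(unit_pivots hDB).
have hCB : forall (k i j : 'I_n.+2), (k <= i)%N -> (k <= j)%N ->
       nrm (ge_iter B k i j) <= nrm (ge_iter B k k k).
  move=> k i j; case: (unliftP ord0 k) => [k'|] ->.
    case: (unliftP ord0 i) => [i'|] ->; last by rewrite lift0.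
    case: (unliftP ord0 j) => [j'|] ->; last by rewrite lift0.
    rewrite !lift0 !ltnS => ki kj; rewrite !ge_iter_Bmat'; exact: hC.
  move=> _ _ /=; rewrite Bmat_00.
  case: (unliftP ord0 i) => [i'|] ->; case: (unliftP ord0 j) => [j'|] ->;
    rewrite ?Bmat_ll ?Bmat_00 ?Bmat_0l ?Bmat_l0 ?nrm0 ?nrm_ge0 //.
exists B; split; first by split.
rewrite mul1r !growthE.
have hdenA : 0 <= gden nrm A by apply: bmax_ge0.
have hden : gden nrm B <= gden nrm A.
  apply: gden_le => // i j.
  case: (unliftP ord0 i) => [i'|] ->; case: (unliftP ord0 j) => [j'|] ->;
    rewrite ?Bmat_ll ?Bmat_00 ?Bmat_0l ?Bmat_l0 ?nrm0 //; exact: gden_ge.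
have hden0 : 0 < gden nrm B.
  by apply: lt_le_trans (gden_ge _ B ord0 ord0); rewrite Bmat_00 nrm_gt0.
have hnum : gnum nrm A <= gnum nrm B.
  apply: gnum_le; first exact: gnum_ge0.
  move=> k i j ki kj; rewrite -(ge_iter_Bmat' x); apply: gnum_ge; by rewrite !lift0 ltnS.
apply: (@le_trans _ _ (gnum nrm A / gden nrm B)).
  apply: ler_wpM2l; first exact: gnum_ge0.
  by rewrite lef_pV2 ?posrE // (lt_le_trans hden0 hden).
by apply: ler_wpM2r => //; rewrite invr_ge0 ltW.
Qed.

End Norm.

Section Kron.
Variables (F : fieldType).

Lemma half_lt n (i : 'I_(2 * n)) : (i %/ 2 < n)%N.
Proof. have := ltn_ord i; lia. Qed.

Definition hlf n (i : 'I_(2 * n)) : 'I_n := Ordinal (half_lt i).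

Definition hs (a b : bool) : F := if a && b then -1 else 1.

Definition Kmat n (A : 'M[F]_n) : 'M[F]_(2 * n) :=
  \matrix_(i, j) (A (hlf i) (hlf j) * hs (odd i) (odd j)).

Lemma hs_f a : hs a false = 1. Proof. by case: a. Qed.
Lemma f_hs a : hs false a = 1. Proof. by []. Qed.

Lemma o2k_lt n k : (k < n)%N -> (2 * k < 2 * n)%N. Proof. lia. Qed.
Lemma o2k1_lt n k : (k < n)%N -> ((2 * k).+1 < 2 * n)%N. Proof. lia. Qed.

Section Inv.
Variables (n : nat) (A : 'M[F]_n).
Hypothesis piv : forall k : 'I_n, ge_iter A k k k != 0.
Local Notation M := (Kmat A).

Lemma half_o2k k (hk : (k < n)%N) : hlf (Ordinal (o2k_lt hk)) = Ordinal hk.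
Proof. apply: val_inj => /=; lia. Qed.
Lemma half_o2k1 k (hk : (k < n)%N) : hlf (Ordinal (o2k1_lt hk)) = Ordinal hk.
Proof. apply: val_inj => /=; lia. Qed.
Lemma odd_o2k k (hk : (k < n)%N) : odd (Ordinal (o2k_lt hk)) = false.
Proof. by rewrite /= oddM. Qed.
Lemma odd_o2k1 k (hk : (k < n)%N) : odd (Ordinal (o2k1_lt hk)) = true.
Proof. by rewrite /= oddM. Qed.

Definition Inv k := forall i j : 'I_(2 * n), (2 * k <= i)%N -> (2 * k <= j)%N ->
  ge_iter M (2 * k) i j = ge_iter A k (hlf i) (hlf j) * hs (odd i) (odd j).

Lemma Inv0 : Inv 0.
Proof. by move=> i j _ _; rewrite mxE. Qed.

Lemma Zstep k (hk : (k < n)%N) : Inv k ->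
  forall i j : 'I_(2 * n), ((2 * k).+1 <= i)%N -> ((2 * k).+1 <= j)%N ->
  ge_iter M (2 * k).+1 i j =
    ge_iter A k (hlf i) (hlf j) * hs (odd i) (odd j)
    - ge_iter A k (hlf i) (Ordinal hk) * ge_iter A k (Ordinal hk) (hlf j)
      / ge_iter A k (Ordinal hk) (Ordinal hk).
Proof.
move=> IH i j hi hj.
rewrite (ge_iterS _ (o2k_lt hk)) mxE /=.
have -> : ((2 * k < i)%N && (2 * k < j)%N) by apply/andP.
rewrite !IH ?leqnn ?(ltnW hi) ?(ltnW hj) // half_o2k odd_o2k !hs_f !f_hs !mulr1.
by [].
Qed.

Hypothesis two_nz : (2 : F) != 0.
Lemma InvS k (hk : (k < n)%N) : Inv k -> Inv k.+1.
Proof.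
move=> IH i j hi hj.
have e : (2 * k.+1 = (2 * k).+2)%N by lia.
rewrite e in hi hj *.
rewrite [in RHS](ge_iterS _ hk) [in RHS]mxE.
have -> : (k < hlf i)%N && (k < hlf j)%N by apply/andP; split => /=; lia.
rewrite (ge_iterS _ (o2k1_lt hk)) mxE /=.
have -> : ((2 * k).+1 < i)%N && ((2 * k).+1 < j)%N by apply/andP.
rewrite !(Zstep hk IH) /= ?leqnn ?(ltnW hi) ?(ltnW hj) // half_o2k1 oddM /=.
have p0 := piv (Ordinal hk).
move: p0; set p := ge_iter A k (Ordinal hk) (Ordinal hk) => p0.
have e2 : p * hs true true - p * p / p = - (2 * p) by rewrite /hs /=; field.
rewrite e2.
by case: (odd i); case: (odd j); rewrite /hs /=; field; rewrite p0 oppr_eq0 mulf_neq0.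
Qed.

Lemma Inv_all k : (k <= n)%N -> Inv k.
Proof. elim: k => [|k IHk] hk; [exact: Inv0 | exact: InvS (IHk (ltnW hk))]. Qed.

End Inv.
End Kron.

Lemma split_ord n (s : 'I_(2 * n)) :
  exists k (hk : (k < n)%N), s = Ordinal (o2k_lt hk) \/ s = Ordinal (o2k1_lt hk).
Proof.
exists (s %/ 2)%N, (half_lt s).
have := odd_double_half s; rewrite -divn2 -addnn.
case: (odd s) => /= h; [right|left]; apply: val_inj => /=; lia.
Qed.

Section Norm2.
Variables (R : realType) (F : fieldType) (nrm : F -> R).
Hypotheses (nrm_ge0 : forall x, 0 <= nrm x) (nrm_gt0 : forall x, x != 0 -> 0 < nrm x)
  (nrm0 : nrm 0 = 0) (nrmM : forall x y, nrm (x * y) = nrm x * nrm y)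
  (nrmD : forall x y, nrm (x + y) <= nrm x + nrm y) (nrmN1 : nrm (-1) = 1)
  (nrm2 : nrm 2 = 2).

Let nrmN' x : nrm (- x) = nrm x := nrmN nrmM nrmN1 x.
Let nrm_div' x y : nrm (x / y) = nrm x / nrm y := nrm_div nrm_gt0 nrm0 nrmM nrmN1 x y.

Lemma nrm_hs a b : nrm (hs F a b) = 1.
Proof. by rewrite /hs; case: (a && b) => //; rewrite (nrm1 nrmM nrmN1). Qed.

Lemma two_nz : (2 : F) != 0.
Proof. apply/eqP => h; move: nrm2; rewrite h nrm0 => h2; clear h; lra. Qed.

Lemma step_ii n (A : 'M[F]_n.+1) : CPset nrm A ->
  exists B : 'M[F]_(2 * n.+1), CPset nrm B /\ 2 * growth nrm A <= growth nrm B.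
Proof.
case=> hU [hD hC].
have piv := (unit_pivots hD).1 hU.
set M := Kmat A.
have hInv := Inv_all piv two_nz.
have pe : forall k (hk : (k < n.+1)%N),
    ge_iter M (2 * k) (Ordinal (o2k_lt hk)) (Ordinal (o2k_lt hk)) = ge_iter A k (Ordinal hk) (Ordinal hk).
  move=> k hk; rewrite hInv ?(ltnW hk) // half_o2k odd_o2k /hs /= mulr1 //.
have po : forall k (hk : (k < n.+1)%N),
    ge_iter M (2 * k).+1 (Ordinal (o2k1_lt hk)) (Ordinal (o2k1_lt hk)) =
      - (2 * ge_iter A k (Ordinal hk) (Ordinal hk)).
  move=> k hk; rewrite (Zstep hk (hInv _ (ltnW hk))) // half_o2k1 odd_o2k1 /=.
  have p0 := piv (Ordinal hk).
  by rewrite /hs /=; field.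
have pivM : forall s : 'I_(2 * n.+1), ge_iter M s s s != 0.
  move=> s; have [k [hk [->|->]]] := split_ord s.
    by rewrite /= pe; exact: piv.
  by rewrite /= po oppr_eq0 mulf_neq0 ?two_nz ?piv.
have hDM : ge_defined M by move=> k _; exact: pivM.
have hUM : M \in unitmx by apply/(unit_pivots hDM).
have hCM : forall (s i j : 'I_(2 * n.+1)), (s <= i)%N -> (s <= j)%N ->
       nrm (ge_iter M s i j) <= nrm (ge_iter M s s s).
  move=> s i j; have [k [hk [->|->]]] := split_ord s => /= hi hj.
    rewrite pe hInv ?(ltnW hk) // nrmM nrm_hs mulr1.
    by apply: (hC (Ordinal hk)) => /=; lia.
  rewrite po (Zstep hk (hInv _ (ltnW hk))) // nrmN' nrmM nrm2.
  set p := ge_iter A k (Ordinal hk) (Ordinal hk).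
  have p0 : 0 < nrm p by apply: nrm_gt0; exact: piv.
  have h1 : nrm (ge_iter A k (hlf i) (hlf j)) <= nrm p by apply: (hC (Ordinal hk)) => /=; lia.
  have h2 : nrm (ge_iter A k (hlf i) (Ordinal hk)) <= nrm p by apply: (hC (Ordinal hk)) => /=; lia.
  have h3 : nrm (ge_iter A k (Ordinal hk) (hlf j)) <= nrm p by apply: (hC (Ordinal hk)) => /=; lia.
  apply: le_trans (nrmD _ _) _; rewrite nrmN' nrm_div' !nrmM nrm_hs mulr1.
  have : nrm (ge_iter A k (hlf i) (Ordinal hk)) * nrm (ge_iter A k (Ordinal hk) (hlf j)) / nrm p <= nrm p.
    rewrite ler_pdivrMr // -expr2.
    by apply: ler_pM => //; rewrite nrm_ge0.
  move=> h4; lra.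
exists M; split; first by split.
rewrite !growthE.
have hdenA : 0 <= gden nrm A by apply: bmax_ge0.
have hden : gden nrm M <= gden nrm A.
  apply: gden_le => // i j; rewrite mxE nrmM nrm_hs mulr1; exact: gden_ge.
have hden0 : 0 < gden nrm M.
  have h0 : (0 < n.+1)%N by [].
  apply: lt_le_trans (gden_ge _ M (Ordinal (o2k_lt h0)) (Ordinal (o2k_lt h0))).
  by apply: nrm_gt0; rewrite mxE half_o2k odd_o2k /hs /= mulr1; exact: (piv (Ordinal h0)).
have hnum : 2 * gnum nrm A <= gnum nrm M.
  rewrite mulrC -ler_pdivlMr //.
  apply: gnum_le; first by rewrite divr_ge0 ?gnum_ge0.
  move=> k i j ki kj; apply: le_trans (hC _ _ _ ki kj) _.
  rewrite ler_pdivlMr // -[X in X * _](nrmN') -nrm2 -nrmM mulrC.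
  have := @gnum_ge _ _ nrm _ M (Ordinal (o2k1_lt (ltn_ord k))) (Ordinal (o2k1_lt (ltn_ord k)))
     (Ordinal (o2k1_lt (ltn_ord k))) (leqnn _) (leqnn _).
  have ek : Ordinal (ltn_ord k) = k by apply: val_inj.
  by rewrite /= po ek mulrN.
rewrite mulrA.
apply: (@le_trans _ _ (2 * gnum nrm A / gden nrm M)).
  apply: ler_wpM2l; first by rewrite mulr_ge0 ?gnum_ge0.
  by rewrite lef_pV2 ?posrE // (lt_le_trans hden0 hden).
by apply: ler_wpM2r => //; rewrite invr_ge0 ltW.
Qed.

End Norm2.

Section Q.
Variable R : realType.

Definition Pq (x q : R) (N : nat) := \prod_(i < N) (1 - x * q ^+ i).

Lemma Pq_props (x q : R) : 0 <= x -> x < 1 -> 0 <= q -> q <= 1 ->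
  (forall N, 0 <= Pq x q N) /\ (forall N, Pq x q N.+1 <= Pq x q N) /\
  (forall N, qpoch x q <= Pq x q N).
Proof.
move=> x0 x1 q0 q1.
have fac : forall i, 0 <= 1 - x * q ^+ i <= 1.
  move=> i; have h1 : 0 <= q ^+ i by rewrite exprn_ge0.
  have h2 : q ^+ i <= 1 by rewrite exprn_ile1.
  have h3 : 0 <= x * q ^+ i by rewrite mulr_ge0.
  have h4 : x * q ^+ i <= x by rewrite ler_piMr.
  apply/andP; split; lra.
have pos : forall N, 0 <= Pq x q N.
  by move=> N; apply: prodr_ge0 => i _; case/andP: (fac i).
have dec : forall N, Pq x q N.+1 <= Pq x q N.
  move=> N; rewrite /Pq big_ord_recr /=; apply: ler_piMr; first exact: pos.
  by case/andP: (fac N).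
split => //; split => // N.
apply: nonincreasing_cvgn_ge; first by apply/nonincreasing_seqP => n; exact: dec.
apply: nonincreasing_is_cvgn; first by apply/nonincreasing_seqP => n; exact: dec.
by exists 0 => _ [m _ <-]; exact: pos.
Qed.

Lemma part_iii (g : nat -> \bar R) :
  (forall n : nat, (1 <= n)%N -> (g n <= g n.+1)%E) ->
  (forall n : nat, (1 <= n)%N -> (2%:E * g n <= g (2 * n)%N)%E) ->
  forall (k : nat) (C : R), (2 <= k)%N -> 0 < C ->
     (forall n : nat, (k <= n <= 2 * k - 1)%N -> ((C * n%:R)%:E <= g n)%E) ->
     forall n : nat, (k <= n)%N ->
       ((qpoch (k%:R^-1) (2^-1) / (1 - k%:R^-1) * C * n%:R)%:E <= g n)%E.
Proof.
move=> Hmono Hdbl k C k2 C0 Hbase.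
set x : R := k%:R^-1.
have kpos : (0 : R) < k%:R by rewrite ltr0n; lia.
have x0 : 0 <= x by rewrite invr_ge0 ltW.
have x1 : x < 1 by rewrite invf_lt1 // ltr1n; lia.
have q0 : (0 : R) <= 2^-1 by rewrite invr_ge0.
have q1 : (2^-1 : R) <= 1 by rewrite invf_le1 //; lra.
have [Ppos [Pdec Plim]] := Pq_props x0 x1 q0 q1.
set P := Pq x 2^-1.
have d0 : 0 < 1 - x by lra.
have claim : forall m n, (k <= n)%N -> (n < 2 ^ m * k * 2)%N ->
    ((P m.+1 / (1 - x) * C * n%:R)%:E <= g n)%E.
  elim => [|m IH] n kn nlt.
    have -> : P 1 = 1 - x by rewrite /P /Pq big_ord1 expr0 mulr1.
    rewrite divff ?gt_eqF // mul1r; apply: Hbase; rewrite kn /=.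
    rewrite expn0 mul1n in nlt; lia.
  set U := (2 ^ m * k)%N.
  have Uk : (k <= U)%N by rewrite /U leq_pmull // expn_gt0.
  have e : (2 ^ m.+1 * k * 2 = U * 4)%N by rewrite /U expnS; lia.
  rewrite e in nlt.
  have a0 : 0 <= P m.+1 / (1 - x) * C by rewrite mulr_ge0 ?divr_ge0 // ?ltW.
  have hP : P m.+2 = P m.+1 * (1 - x * 2^-1 ^+ m.+1) by rewrite /P /Pq big_ord_recr.
  case: (ltnP n (U * 2)) => hn.
    apply: le_trans (IH n kn hn); rewrite lee_fin.
    apply: ler_wpM2r => //; apply: ler_wpM2r; first exact: ltW.
    by apply: ler_wpM2r; [rewrite invr_ge0 ltW | exact: Pdec].
  set h := (n %/ 2)%N.
  have kh : (k <= h)%N by rewrite /h; lia.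
  have hlt : (h < 2 ^ m * k * 2)%N by rewrite -/U /h; lia.
  have IHh := IH h kh hlt.
  have g2h : (g (2 * h)%N <= g n)%E.
    have : n = (2 * h)%N \/ n = (2 * h).+1 by rewrite /h; lia.
    by case=> ->; [| apply: Hmono; lia].
  apply: (le_trans _ g2h).
  have h1 : (0 < h)%N by lia.
  apply: (le_trans _ (Hdbl h h1)).
  apply: (@le_trans _ _ (2%:E * (P m.+1 / (1 - x) * C * h%:R)%:E)%E); last first.
    by apply: lee_wpmul2l.
  rewrite -EFinM lee_fin hP.
  have nat1 : (n <= 2 * h + 1)%N by rewrite /h; lia.
  have nat2 : (U * 2 <= n)%N := hn.
  have r1 : n%:R <= 2 * h%:R + 1 :> R.
    by rewrite -(ler_nat R) natrD natrM in nat1.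
  have r2 : (U * 2)%:R <= n%:R :> R by rewrite ler_nat.
  have eU : (U * 2)%:R = x^-1 * 2 ^+ m.+1 :> R.
    by rewrite /U /x invrK !natrM natrX exprS; ring.
  set y := x * 2^-1 ^+ m.+1.
  have ey : y * (U * 2)%:R = 1.
    rewrite eU /y exprVn; field; rewrite expf_neq0 ?andbT // invr_eq0; exact: lt0r_neq0 kpos.
  have y0 : 0 <= y by rewrite mulr_ge0 // exprn_ge0 // invr_ge0.
  have ny : 1 <= n%:R * y.
    by have := ler_wpM2l y0 r2; rewrite ey mulrC.
  have key : (1 - y) * n%:R <= 2 * h%:R by nra.
  have -> : P m.+1 * (1 - y) / (1 - x) * C * n%:R
      = (P m.+1 / (1 - x) * C) * ((1 - y) * n%:R) by ring.
  have -> : 2 * (P m.+1 / (1 - x) * C * h%:R) = (P m.+1 / (1 - x) * C) * (2 * h%:R) by ring.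
  exact: ler_wpM2l.
move=> n kn.
have nlt : (n < 2 ^ n * k * 2)%N.
  have := ltn_expl n (isT : (1 < 2)%N).
  have : (1 <= k * 2)%N by lia.
  move: (2 ^ n)%N => t; nia.
apply: le_trans (claim n n kn nlt); rewrite lee_fin.
apply: ler_wpM2r => //; apply: ler_wpM2r; first exact: ltW.
by apply: ler_wpM2r; [rewrite invr_ge0 ltW | exact: Plim].
Qed.
End Q.

Lemma main_gen (R : realType) (F : fieldType) (nrm : F -> R)
  (nrm_ge0 : forall x, 0 <= nrm x) (nrm_gt0 : forall x, x != 0 -> 0 < nrm x)
  (nrm0 : nrm 0 = 0) (nrmM : forall x y, nrm (x * y) = nrm x * nrm y)
  (nrmD : forall x y, nrm (x + y) <= nrm x + nrm y) (nrmN1 : nrm (-1) = 1)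
  (nrm2 : nrm 2 = 2) :
  (forall n : nat, (1 <= n)%N -> (gCP nrm n <= gCP nrm n.+1)%E) /\
  (forall n : nat, (1 <= n)%N -> (2%:E * gCP nrm n <= gCP nrm (2 * n))%E).
Proof.
split; case => // n _.
  rewrite -[X in (X <= _)%E]mul1e; apply: gCP_transfer => // A hA.
  by apply: step_i.
apply: gCP_transfer => // A hA.
by apply: step_ii.
Qed.

Lemma normc_ge0 (R : realType) (x : R[i]) : 0 <= ComplexField.Normc.normc x.
Proof. by case: x => a b; rewrite /ComplexField.Normc.normc sqrtr_ge0. Qed.

Unset Implicit Arguments.
Theorem mainTheorem10 (R : realType) (S : scalars) :
  (forall n : nat, (1 <= n)%N -> (gCPS R S n <= gCPS R S n.+1)%E) /\
  (forall n : nat, (1 <= n)%N -> (2%:E * gCPS R S n <= gCPS R S (2 * n))%E) /\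
  (forall (k : nat) (C : R), (2 <= k)%N -> 0 < C ->
     (forall n : nat, (k <= n <= 2 * k - 1)%N -> ((C * n%:R)%:E <= gCPS R S n)%E) ->
     forall n : nat, (k <= n)%N ->
       ((qpoch (k%:R^-1) (2^-1) / (1 - k%:R^-1) * C * n%:R)%:E <= gCPS R S n)%E).
Proof.
have [H1 H2] : (forall n : nat, (1 <= n)%N -> (gCPS R S n <= gCPS R S n.+1)%E) /\
  (forall n : nat, (1 <= n)%N -> (2%:E * gCPS R S n <= gCPS R S (2 * n))%E).
  case: S => /=; apply: main_gen.
  - by move=> x; rewrite normr_ge0.
  - by move=> x; rewrite normr_gt0.
  - exact: normr0.
  - exact: normrM.
  - exact: ler_normD.
  - exact: normrN1.
  - by rewrite ger0_norm.
  - exact: normc_ge0.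
  - move=> x x0; rewrite lt_neqAle normc_ge0 andbT eq_sym; apply/eqP.
    by move=> /ComplexField.Normc.eq0_normc h; rewrite h eqxx in x0.
  - exact: ComplexField.Normc.normc0.
  - exact: ComplexField.Normc.normcM.
  - exact: le_normcD.
  - by rewrite normcN ComplexField.Normc.normc1.
  - by have := normcMn (1 : R[i]) 2; rewrite ComplexField.Normc.normc1.
split => //; split => //.
exact: part_iii.
Qed.
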